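(* Let $G$ be a wireline network, $\mathcal{A}$ an adversary and $\mathcal{S}$ a scheduling policy, and let $\mathcal{D}$ be an arbitrary execution of the wireline system $(G,\mathcal{A},\mathcal{S})$. Let $G^{\equiv}$ be the equivalent network of $G$ and $\mathcal{D}^{\equiv}$ the equivalent execution of the radio routing protocol using scheduling policy $\mathcal{S}$ and the work-conserving transmission oracle against the adversary $\mathcal{A}^{\equiv}$ in $G^{\equiv}$ (all as defined in the context). Then for every packet $p$ of $\mathcal{D}$, every link $e$ of $G$ and every round $t$: $p$ is in the queue of link $e$ at round $t$ in $\mathcal{D}$ if and only if $p^{\equiv}$ is in the queue of node $v^{e}$ at round $t$ in $\mathcal{D}^{\equiv}$.
   Context: Classical wireline adversarial queuing model: a network is a directed graph $G$; time proceeds in synchronous rounds; each directed link $e$ has its own queue of packets waiting to cross $e$; in each round each link transmits at most one packet from its queue, the packet being chosen by the scheduling policy $\mathcal{S}$ (a rule that selects one packet from a set of packets waiting at a queue, based on attributes such as injection time and path); packets are injected by an adversary, each with its complete path (a sequence of links) fixed at injection. Multi-hop radio network model: a network is a graph whose nodes are transceivers; each node keeps a single queue of packets waiting to be forwarded; each packet is injected with its complete path; in each round a node transmits at most one packet, selected from its queue by the scheduling policy; when a node transmits a packet and the next node on the packet's path hears it, the packet leaves the sender's queue and is appended to the recipient's queue (or absorbed if it has reached its destination). A transmission oracle tells each node in each round whether to transmit. The work-conserving oracle lets every node transmit in every round (one packet per round) whenever its queue is nonempty; here the scenario is assumed free of interferences, so every transmitted packet is heard by its intended recipient (in this case proactive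 and reactive hearing control behave identically). Equivalent network: given wireline network $G$, $G^{\equiv}$ has one node $v^{e}$ for each link $e$ of $G$, and for each pair of links $e=(\cdot,u)$ and $f=(u,\cdot)$ of $G$ the node $v^{e}$ is connected to $v^{f}$. The queue of link $e$ in $G$ and the queue of node $v^{e}$ in $G^{\equiv}$ are called equivalent. Equivalent execution: for each packet $p$ injected by $\mathcal{A}$ at some round, $\mathcal{A}^{\equiv}$ injects a packet $p^{\equiv}$ at the same round following the path obtained by replacing each queue (link) on the path of $p$ by its equivalent queue (node); $p^{\equiv}$ may be absorbed at any node pointed to by its last traversed queue. The same scheduling policy $\mathcal{S}$ is used in both systems. *)

(* Defs.v *)
From mathcomp Require Import all_boot.
Set Implicit Arguments. Unset Strict Implicit. Unset Printing Implicit Defensive.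

(** * Packets
    A packet in flight is ((pid, injection round), path, hop), where the path
    is the full sequence of queues it must traverse (fixed at injection) and
    [hop] is the index in the path of the queue it currently waits in. *)
Definition packet (Q : Type) := (((nat * nat) * seq Q) * nat)%type.
Definition pid {Q} (p : packet Q) : nat := p.1.1.1.
Definition itime {Q} (p : packet Q) : nat := p.1.1.2.
Definition route {Q} (p : packet Q) : seq Q := p.1.2.
Definition hop {Q} (p : packet Q) : nat := p.2.

(** next queue on the path after the current one (None = absorbed next) *)
Definition next_queue {Q} (p : packet Q) : option Q := ohead (drop (hop p).+1 (route p)).
Definition advance {Q} (p : packet Q) : packet Q := (p.1, (hop p).+1).

(** An adversary injects, at each round, a list of (packet id, path). *)
Definition adversary (Q : Type) := nat -> seq (nat * seq Q).

Definition policy (Q : Type) := nat -> seq (packet Q) -> option (packet Q).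
Definition policy_ok {Q : eqType} (S : policy Q) : Prop :=
  forall t q, (q != [::] -> S t q != None) /\ (forall p, S t q = Some p -> p \in q).

Definition valid_route {Q} (r : rel Q) (s : seq Q) : bool :=
  if s is x :: s' then path r x s' else false.

Definition configuration (Q : Type) := Q -> seq (packet Q).

Definition inject {Q : eqType} (A : adversary Q) (t : nat) (c : configuration Q)
  : configuration Q :=
  fun q => c q ++ [seq (x.1, t, x.2, 0) | x <- A t & ohead x.2 == Some q].

Section Wireline.
Variables (V E : finType) (src dst : E -> V) (S : policy E) (A : adversary E).

Definition wire_step (t : nat) (c : configuration E) : configuration E :=
  fun f =>
    (if S t (c f) is Some p then rem p (c f) else c f) ++
    [seq advance p | p <- pmap (fun e => S t (c e)) (enum E) & next_queue p == Some f].

(** Queues during round t (after the injections of round t). *)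
Fixpoint wire_conf (t : nat) : configuration E :=
  match t with
  | 0 => inject A 0 (fun _ => [::])
  | t'.+1 => inject A t'.+1 (wire_step t' (wire_conf t'))
  end.
End Wireline.

Definition link_rel {V E : finType} (src dst : E -> V) : rel E :=
  fun e f => dst e == src f.

Definition oracle (N : Type) := nat -> N -> seq (packet N) -> bool.
(** hearing: at round t, with transmitter set T, does the intended recipient
    ([Some w], or [None] = the absorbing destination) hear node u? *)
Definition hearing (N : finType) := nat -> {set N} -> N -> option N -> bool.

Definition work_conserving {N : eqType} : oracle N := fun _ _ q => q != [::].

Definition interference_free {N : finType} (adj : rel N) (H : hearing N) : Prop :=
  forall t (T : {set N}) (u : N), u \in T ->
    H t T u None /\ (forall w, adj u w -> H t T u (Some w)).

Section Radio.
Variables (N : finType) (S : policy N) (O : oracle N) (H : hearing N) (A : adversary N).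

Definition radio_step (t : nat) (c : configuration N) : configuration N :=
  let ch u := if O t u (c u) then S t (c u) else None in
  let T := [set u | ch u != None] in
  let sent u := if ch u is Some p then
                  (if H t T u (next_queue p) then Some p else None) else None in
  fun w =>
    (if sent w is Some p then rem p (c w) else c w) ++
    [seq advance p | p <- pmap sent (enum N) & next_queue p == Some w].

Fixpoint radio_conf (t : nat) : configuration N :=
  match t with
  | 0 => inject A 0 (fun _ => [::])
  | t'.+1 => inject A t'.+1 (radio_step t' (radio_conf t'))
  end.
End Radio.

(** * Equivalent network G^≡: node v^e for each link e (we represent v^e by e
    itself), v^e connected to v^f iff e = (.,u) and f = (u,.). *)
Definition vnode {E : Type} (e : E) : E := e.
Definition equiv_adj {V E : finType} (src dst : E -> V) : rel E :=
  fun e f => dst e == src f.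
Definition equiv_adversary {E : Type} (A : adversary E) : adversary E :=
  fun t => [seq (x.1, map vnode x.2) | x <- A t].

(* Main.v *)
Require Import Defs.
From mathcomp Require Import all_boot.
From Stdlib Require Import FunctionalExtensionality.

Section Aux.
Variables (V E : finType) (src dst : E -> V) (S : policy E) (A : adversary E) (H : hearing E).
Hypothesis SP : policy_ok S.
Hypothesis AV : forall t x, x \in A t -> valid_route (link_rel src dst) x.2.
Hypothesis IF : interference_free (equiv_adj src dst) H.

Definition Inv (c : configuration E) : Prop :=
  forall q p, p \in c q ->
    [/\ hop p < size (route p), nth q (route p) (hop p) = q &
        valid_route (link_rel src dst) (route p)].

Lemma inv_inject t c : Inv c -> Inv (inject A t c).
Proof.
move=> I q p; rewrite mem_cat => /orP[/I//|].
case/mapP=> x; rewrite mem_filter => /andP[hq xA] ->.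
rewrite /hop /route /=; have := AV _ _ xA.
case: x hq xA => a [|y s] //= /eqP [->] _ v; split=> //.
Qed.

Lemma next_queueP {p : packet E} {w : E} : next_queue p = Some w ->
  (hop p).+1 < size (route p) /\ nth w (route p) (hop p).+1 = w.
Proof.
rewrite /next_queue.
case: (ltnP (hop p).+1 (size (route p))) => h.
  by rewrite (drop_nth w h) /= => -[->].
by rewrite drop_oversize.
Qed.

Lemma inv_step t c : Inv c -> Inv (wire_step S t c).
Proof.
move=> I q p; rewrite mem_cat => /orP[|].
  case E1: (S t (c q)) => [x|]; last by move/I.
  by move/mem_rem/I.
case/mapP=> x; rewrite mem_filter => /andP[/eqP nq].
rewrite mem_pmap => /mapP[u _ Su] ->.
have [_ /(_ x (esym Su)) xin] := SP t (c u).
have [h1 h2 h3] := I _ _ xin.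
have [n1 n2] := next_queueP nq.
by split.
Qed.

Lemma sent_eq t c u : Inv c ->
  (let ch u := if work_conserving t u (c u) then S t (c u) else None in
   let T := [set u | ch u != None] in
   if ch u is Some p then (if H t T u (next_queue p) then Some p else None) else None)
  = S t (c u).
Proof.
move=> I /=.
have chE : forall u, (if work_conserving t u (c u) then S t (c u) else None) = S t (c u).
  move=> v; rewrite /work_conserving; case: eqP => [->|] //=.
  by case E1: (S t [::]) => [x|] //; have [_ /(_ x E1)] := SP t [::].
rewrite chE.
case E1: (S t (c u)) => [p|] //.
have uT : u \in [set u | (if work_conserving t u (c u) then S t (c u) else None) != None].
  by rewrite inE chE E1.
have [HN HS] := IF t [set u | (if work_conserving t u (c u) then S t (c u) else None) != None] u uT.
case nq: (next_queue p) => [w|]; last by rewrite HN.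
have [_ /(_ p E1) pin] := SP t (c u).
have [h1 h2 h3] := I _ _ pin.
have [n1 n2] := next_queueP nq.
rewrite HS //.
move: h2 n2 h3 n1; case: (route p) => [|x s] //= h2 n2 /(pathP u) P n1.
have := P (hop p) n1.
by rewrite h2 (set_nth_default w) // n2.
Qed.

Lemma step_eq t c : Inv c -> radio_step S work_conserving H t c = wire_step S t c.
Proof.
move=> I; apply: functional_extensionality => w.
rewrite /radio_step /wire_step /=.
have E2 := sent_eq t c; simpl in E2.
rewrite (E2 w I) (eq_pmap (fun u => E2 u I)).
by [].
Qed.

Lemma equiv_advE : equiv_adversary A = A.
Proof.
apply: functional_extensionality => t; rewrite /equiv_adversary.
elim: (A t) => //= [[a s]] l ->; congr ((a, _) :: _).
by elim: s => //= y s ->.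
Qed.

Lemma conf_eq t : radio_conf S work_conserving H (equiv_adversary A) t = wire_conf S A t
  /\ Inv (wire_conf S A t).
Proof.
rewrite equiv_advE.
elim: t => [|t [IH I]] /=.
  by split=> //; apply: inv_inject => q p.
rewrite IH step_eq //; split=> //.
by apply/inv_inject/inv_step.
Qed.
End Aux.

Theorem lemma1 (V E : finType) (src dst : E -> V) (S : policy E) (A : adversary E)
    (H : hearing E) :
  policy_ok S ->
  (forall t x, x \in A t -> valid_route (link_rel src dst) x.2) ->
  interference_free (equiv_adj src dst) H ->
  forall (i t0 : nat) (r : seq E) (e : E) (t : nat),
    (exists h, (i, t0, r, h) \in wire_conf S A t e) <->
    (exists h, (i, t0, map vnode r, h) \in
       radio_conf S work_conserving H (equiv_adversary A) t (vnode e)).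
Proof.
move=> SP AV IF i t0 r e t.
have [-> _] := @conf_eq V E src dst S A H SP AV IF t.
have -> : map vnode r = r by elim: r => //= y s ->.
by [].
Qed.
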